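(* Let $P$ be a finite poset and $X:P\to\mathcal{P}_{<\infty}$ a diagram of finite posets. If $p\in P$ is an up beat point of $P$, then $\operatorname{\underline{hocolim}} X$ collapses to $\operatorname{\underline{hocolim}} X|_{P\smallsetminus\{p\}}$. In particular, they are weak equivalent.
   Context: $P$ is viewed as a category with a unique arrow $p\to q$ iff $p\le q$; $\mathcal{P}_{<\infty}$ is the category of finite posets and order-preserving maps. Write $X_p=X(p)$, $f_{pq}=X(p\to q)$. $\operatorname{\underline{hocolim}} X$ is the poset on $\coprod_{p}X_p$ keeping the order within each $X_p$ and, for $x\in X_p$, $y\in X_q$, $p\le q$, setting $x\le y$ iff $f_{pq}(x)\le y$ in $X_q$. For a subposet $Q'\subseteq P$, $X|_{Q'}$ is the restricted diagram, and $\operatorname{\underline{hocolim}} X|_{Q'}$ is a subposet of $\operatorname{\underline{hocolim}} X$. For $x$ in a finite poset $Y$: $U_x=\{y\le x\}$, $\hat U_x=U_x\smallsetminus\{x\}$, $F_x=\{y\ge x\}$, $\hat F_x=F_x\smallsetminus\{x\}$. $x$ is an up beat point if $\hat F_x$ has a minimum, a down beat point if $\hat U_x$ has a maximum. A finite poset is contractible (dismantlable) if it can be reduced to a single point by removing beat points one at a time. $x$ is a down (resp. up) weak point if $\hat U_x$ (resp. $\hat F_x$) is contractible; removing a weak point is an elementary collapse, and $Y$ collapses to $Z$ if $Z$ is obtained from $Y$ by a sequence of elementary collapses. Two finite posets are weak equivalent if their order complexes (simplicial complexes of nonempty chains) are homotopy equivalent. *)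

(* Defs.v *)
From mathcomp Require Import all_boot.
Set Implicit Arguments. Unset Strict Implicit. Unset Printing Implicit Defensive.

(* A finite poset is a finType with a (boolean) partial order.  Subposets of a
   fixed finite poset (T, le) are represented by subsets S : {set T} with the
   induced order. *)
Definition is_poset (T : finType) (le : rel T) : Prop :=
  [/\ reflexive le, antisymmetric le & transitive le].

Section SubPosets.
Variables (T : finType) (le : rel T).

Definition Uset (S : {set T}) (x : T) : {set T} := [set y in S | le y x].
Definition hUset (S : {set T}) (x : T) : {set T} := Uset S x :\ x.
Definition Fset (S : {set T}) (x : T) : {set T} := [set y in S | le x y].
Definition hFset (S : {set T}) (x : T) : {set T} := Fset S x :\ x.

Definition has_min (A : {set T}) : Prop :=
  exists2 m, m \in A & forall y, y \in A -> le m y.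
Definition has_max (A : {set T}) : Prop :=
  exists2 m, m \in A & forall y, y \in A -> le y m.

Definition up_beat_point (S : {set T}) (x : T) : Prop :=
  x \in S /\ has_min (hFset S x).
Definition down_beat_point (S : {set T}) (x : T) : Prop :=
  x \in S /\ has_max (hUset S x).
Definition beat_point (S : {set T}) (x : T) : Prop :=
  up_beat_point S x \/ down_beat_point S x.

Inductive contractible : {set T} -> Prop :=
  | contr_point x : contractible [set x]
  | contr_step S x : beat_point S x -> contractible (S :\ x) -> contractible S.

Definition down_weak_point (S : {set T}) (x : T) : Prop :=
  x \in S /\ contractible (hUset S x).
Definition up_weak_point (S : {set T}) (x : T) : Prop :=
  x \in S /\ contractible (hFset S x).
Definition weak_point (S : {set T}) (x : T) : Prop :=
  down_weak_point S x \/ up_weak_point S x.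

Inductive collapses : {set T} -> {set T} -> Prop :=
  | collapses_refl S : collapses S S
  | collapses_step S x Z : weak_point S x -> collapses (S :\ x) Z -> collapses S Z.

End SubPosets.

Unset Implicit Arguments.

(* The poset hocolim X of a diagram X : P -> finite posets, with
   f p q h : X p -> X q the map X(p -> q), defined for h : p <= q.
   The underlying set is the disjoint union {p : P & X p}. *)
Section Hocolim.
Variables (P : finType) (leP : rel P) (X : P -> finType)
  (lex : forall p, rel (X p)) (f : forall p q, leP p q -> X p -> X q).

Definition hle (u v : {p : P & X p}) : bool :=
  let: existT p x := u in
  let: existT q y := v in
  (if leP p q as b return leP p q = b -> bool
   then fun h => lex q (f p q h x) y else fun _ => false) (erefl (leP p q)).

(* hocolim X|_{Q'} as a subposet of hocolim X *)
Definition hocolim_restr (Q : {set P}) : {set {p : P & X p}} :=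
  [set u | tag u \in Q].

End Hocolim.
Arguments hle {P leP X} lex f u v.
Arguments hocolim_restr {P} X Q.

(* Main.v *)
Require Import Defs.
From mathcomp Require Import all_boot.
Lemma hleP (P : finType) (leP : rel P) (X : P -> finType) (lex : forall p, rel (X p))
  (f : forall p q, leP p q -> X p -> X q) p q (x : X p) (y : X q) :
  reflect (exists h : leP p q, lex q (f p q h x) y)
    (hle lex f (existT _ p x) (existT _ q y)).
Proof.
rewrite /hle.
have H : forall b (e : leP p q = b),
  reflect (exists h : leP p q, lex q (f p q h x) y)
  ((if b as b' return leP p q = b' -> bool then (fun h => lex q (f p q h x) y) else (fun _ => false)) e).
  case=> e /=.
    apply: (iffP idP) => [H|[h H]]; first by exists e.
    by rewrite (bool_irrelevance e h).
  by constructor => -[h _]; rewrite e in h.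
exact: H.
Qed.

Lemma exists_max (T : finType) (le : rel T) (Hle : is_poset le) (A : {set T}) (x0 : T) :
  x0 \in A -> exists2 x, x \in A & forall y, y \in A -> le x y -> y = x.
Proof.
case: Hle => Hr Ha Ht Hx0.
case: (arg_minnP (fun x => #|Fset le A x|) Hx0) => x xA Hmin.
exists x => // y yA lxy; apply/eqP/negPn/negP => ny.
have: Fset le A y \proper Fset le A x.
  rewrite properE; apply/andP; split.
    by apply/subsetP=> z; rewrite !inE => /andP[-> /(Ht _ _ _ lxy) ->].
  apply/negP => /subsetP /(_ x); rewrite !inE (xA : x \in A) Hr /= => /(_ isT) lyx.
  by move: ny; rewrite (Ha x y) ?eqxx // lxy lyx.
by move/proper_card; rewrite ltnNge Hmin //.
Qed.

Lemma contractible_min (T : finType) (le : rel T) (Hle : is_poset le) :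
  forall n (S : {set T}), #|S| = n -> forall m, m \in S -> (forall y, y \in S -> le m y) ->
  contractible le S.
Proof.
have Hle' := Hle; case: Hle' => Hr Ha Ht.
have Hle2 : is_poset (fun a b => le b a).
  split => //. by move=> a b /andP[h1 h2]; apply: Ha; rewrite h1 h2.
  by move=> a b c h1 h2; apply: Ht h2 h1.
elim=> [|n IH] S cS m mS Hm.
  by move: cS => /eqP; rewrite cards_eq0 => /eqP S0; rewrite S0 inE in mS.
case: (set_0Vmem (S :\ m)) => [Sm|[x0 x0S]].
  have -> : S = [set m].
    apply/setP=> z; rewrite inE; apply/idP/idP => [zS|/eqP->//].
    apply/negPn/negP => zm; have: z \in S :\ m by rewrite !inE zm.
    by rewrite Sm inE.
  exact: contr_point.
case: (@exists_max _ _ Hle2 _ _ x0S) => x xS xmin.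
move: (xS); rewrite !inE => /andP[xm xS'].
apply: (@contr_step _ _ _ x).
  right; split => //; exists m.
    by rewrite !inE eq_sym xm mS Hm.
  move=> y; rewrite !inE => /andP[yx /andP[yS lyx]].
  case: (eqVneq y m) => [->|ym]; first exact: Hr.
  by rewrite (xmin y) ?eqxx ?Hr // in yx; rewrite !inE ym.
apply: (IH _ _ m); first by rewrite (cardsD1 x) xS' in cS; case: cS.
  by rewrite !inE eq_sym xm.
by move=> y; rewrite !inE => /andP[_ /Hm].
Qed.

Theorem proposition2p4
  (P : finType) (leP : rel P) (HP : is_poset leP)
  (X : P -> finType) (lex : forall p, rel (X p))
  (HX : forall p, is_poset (lex p))
  (f : forall p q, leP p q -> X p -> X q)
  (f_mono : forall p q (h : leP p q) (x y : X p),
     lex p x y -> lex q (f p q h x) (f p q h y))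
  (f_id : forall p (h : leP p p) (x : X p), f p p h x = x)
  (f_comp : forall p q r (h1 : leP p q) (h2 : leP q r) (h3 : leP p r) (x : X p),
     f p r h3 x = f q r h2 (f p q h1 x))
  (p : P) (Hp : up_beat_point leP [set: P] p) :
  collapses (hle lex f) [set: {q : P & X q}] (hocolim_restr X [set~ p]).
Proof.
pose T := {q : P & X q}.
set le := hle lex f.
case: (HP) => HPr HPa HPt.
have Hle : is_poset le.
  split.
  - case=> r x; apply/hleP; exists (HPr r); rewrite f_id; case: (HX r) => + _ _; exact.
  - case=> r x [s y] /andP[/hleP[h1 H1] /hleP[h2 H2]].
    have E : r = s by apply: HPa; rewrite h1 h2.
    subst s. rewrite f_id in H1; rewrite f_id in H2.
    case: (HX r) => _ Ha _. by rewrite (Ha x y) // H1 H2.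
  - case=> s y [r x] [t z] /hleP[h1 H1] /hleP[h2 H2].
    apply/hleP; exists (HPt _ _ _ h1 h2).
    rewrite (f_comp _ _ _ h1 h2).
    case: (HX t) => _ _ Ht; apply: Ht H2.
    exact: f_mono.
case: (Hle) => Hr Ha Ht.
case: Hp => _ [q]; rewrite !inE => /andP[qp /andP[_ hpq]] qmin.
set Z := hocolim_restr X [set~ p].
have Zin : forall u : T, (u \in Z) = (tag u != p) by move=> u; rewrite !inE.
suff H : forall n (A : {set T}), #|A| = n -> (forall u, u \in A -> tag u == p) ->
    collapses le (Z :|: A) Z.
  have -> : [set: T] = Z :|: [set u : T | tag u == p].
    by apply/setP => u; rewrite !inE; case: (tag u == p).
  by apply: (H _ _ erefl) => u; rewrite inE.
elim=> [|n IH] A cA Ap.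
  move: cA => /eqP; rewrite cards_eq0 => /eqP ->; rewrite setU0; exact: collapses_refl.
have [x0 x0A] : exists x0, x0 \in A.
  by apply/set0Pn; rewrite -card_gt0 cA.
case: (@exists_max _ _ Hle _ _ x0A) => x xA xmax.
have xZ : x \notin Z by rewrite Zin (Ap x xA).
apply: (@collapses_step _ _ _ x).
  right; split; first by rewrite inE xA orbT.
  have := Ap x xA; move: xA xmax xZ; case: x => r x0' /= xA xmax xZ /eqP E; subst r.
  apply: (@contractible_min _ _ Hle _ _ erefl (existT _ q (f p q hpq x0'))).
    rewrite !inE qp orTb andTb; apply/andP; split.
      by apply/negP => /eqP/(congr1 tag) /= E; rewrite E eqxx in qp.
    apply/hleP; exists hpq; case: (HX q) => + _ _; exact.
  case=> r z; rewrite !inE => /andP[vx /andP[vS /hleP[h H]]].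
  case: (eqVneq r p) => [E|rp].
    subst r; exfalso.
    have vA : existT _ p z \in A by move: vS; rewrite /= eqxx.
    have E : existT (fun i => X i) p z = existT (fun i => X i) p x0'.
      apply: xmax vA _; change (hle lex f (existT (fun i => X i) p x0') (existT (fun i => X i) p z)); apply/hleP; by exists h.
    by rewrite E eqxx in vx.
  have h2 : leP q r by apply: qmin; rewrite !inE rp h.
  apply/hleP; exists h2; rewrite -(f_comp _ _ _ hpq h2 h); exact: H.
have -> : (Z :|: A) :\ x = Z :|: (A :\ x).
  apply/setP => u; rewrite !inE; case: (eqVneq u x) => [->|] //=.
  by rewrite -Zin (negbTE xZ).
apply: IH; first by rewrite (cardsD1 x) xA in cA; case: cA.
by move=> u; rewrite inE => /andP[_ /Ap].
Qed.
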